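(* If $\gamma\in\mathcal{M}_k\otimes\mathcal{M}_m$ is a state with $\gamma^\Gamma\ge0$ (positive under partial transpose), then $\gamma\in CR_{k,m}$.
   Context: $\mathcal{M}_k$ denotes the complex $k\times k$ matrices, and $\mathcal{M}_k\otimes\mathcal{M}_m$ is identified with $\mathcal{M}_{km}$ via the Kronecker product. A state is a positive semidefinite Hermitian matrix (not necessarily of trace one). The partial transpose of $\gamma=\sum_iA_i\otimes B_i$ is $\gamma^\Gamma=\sum_iA_i\otimes B_i^t$. For $\gamma=\sum_{i=1}^nA_i\otimes B_i\in\mathcal{M}_k\otimes\mathcal{M}_m$ define $G_\gamma:\mathcal{M}_k\to\mathcal{M}_m$, $G_\gamma(X)=\sum_i\mathrm{tr}(A_iX)B_i$, and $F_\gamma:\mathcal{M}_m\to\mathcal{M}_k$, $F_\gamma(Y)=\sum_i\mathrm{tr}(B_iY)A_i$. A linear map is positive if it maps positive semidefinite matrices to positive semidefinite matrices, and self-adjoint if self-adjoint with respect to $\langle X,Y\rangle=\mathrm{tr}(XY^* )$. For orthogonal projections $V,W$, $V\mathcal{M}_kW=\{VXW:X\in\mathcal{M}_k\}$. Given an orthogonal projection $V\in\mathcal{M}_k$ and a positive map $T:V\mathcal{M}_kV\to V\mathcal{M}_kV$, $T$ is irreducible if the only orthogonal projections $W$ with $W\mathcal{M}_kW\subseteq V\mathcal{M}_kV$ and $T(W\mathcal{M}_kW)\subseteq W\mathcal{M}_kW$ are $W=0$ and $W=V$. A self-adjoint positive map $T:\mathcal{M}_k\to\mathcal{M}_k$ is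 completely reducible if there are orthogonal projections $W_1,\dots,W_l$ with $W_iW_j=0$ for $i\ne j$, $T(W_i\mathcal{M}_kW_i)\subseteq W_i\mathcal{M}_kW_i$ and $T|_{W_i\mathcal{M}_kW_i}$ irreducible for every $i$, and $T|_R\equiv0$, where $R$ is the orthogonal complement (trace inner product) of $\bigoplus_iW_i\mathcal{M}_kW_i$ in $\mathcal{M}_k$. $CR_{k,m}$ is the set of states $\gamma\in\mathcal{M}_k\otimes\mathcal{M}_m$ such that $F_\gamma\circ G_\gamma:\mathcal{M}_k\to\mathcal{M}_k$ is completely reducible. *)

(* Defs.v *)
(* Complex scalars: an arbitrary numClosedFieldType C
   (the complex numbers are an instance; the statement is stated for all such C). *)
From HB Require Import structures.
From mathcomp Require Import all_boot all_order all_algebra.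
From mathcomp Require Import mxtens.
Set Implicit Arguments. Unset Strict Implicit. Unset Printing Implicit Defensive.
Import Order.TTheory GRing.Theory Num.Theory.
Local Open Scope ring_scope.

Section Defs.
Variable C : numClosedFieldType.

Definition mxadj {p q} (A : 'M[C]_(p, q)) : 'M[C]_(q, p) := map_mx Num.conj (A^T).

(* positive semidefinite Hermitian matrix ("state", trace not normalised) *)
Definition psd {n} (A : 'M[C]_n) : Prop :=
  mxadj A = A /\ forall v : 'rV[C]_n, 0 <= (v *m A *m mxadj v) 0 0.

(* Kronecker identification M_k (x) M_m = M_{km}: the index (i,j) is
   mxtens_index (i,j), so that (A *t B) (i,j) (i',j') = A i i' * B j j'. *)
Definition tidx {k m} (i : 'I_k) (j : 'I_m) : 'I_(k * m) := mxtens_index (i, j).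

(* partial transpose: (sum A_i (x) B_i)^Gamma = sum A_i (x) B_i^T, entrywise
   gamma^Gamma((i,j),(i',j')) = gamma((i,j'),(i',j)) *)
Definition ptrans {k m} (g : 'M[C]_(k * m)) : 'M[C]_(k * m) :=
  \matrix_(p, q) g (tidx (mxtens_unindex p).1 (mxtens_unindex q).2)
                   (tidx (mxtens_unindex q).1 (mxtens_unindex p).2).

(* G_gamma(X) = sum_i tr(A_i X) B_i, written entrywise *)
Definition Gmap {k m} (g : 'M[C]_(k * m)) (X : 'M[C]_k) : 'M[C]_m :=
  \matrix_(j, j') \sum_(i < k) \sum_(i' < k) g (tidx i j) (tidx i' j') * X i' i.

(* F_gamma(Y) = sum_i tr(B_i Y) A_i, written entrywise *)
Definition Fmap {k m} (g : 'M[C]_(k * m)) (Y : 'M[C]_m) : 'M[C]_k :=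
  \matrix_(i, i') \sum_(j < m) \sum_(j' < m) g (tidx i j) (tidx i' j') * Y j' j.

Definition positive_map {k} (T : 'M[C]_k -> 'M[C]_k) : Prop :=
  forall X, psd X -> psd (T X).

Definition selfadjoint_map {k} (T : 'M[C]_k -> 'M[C]_k) : Prop :=
  forall X Y, \tr (T X *m mxadj Y) = \tr (X *m mxadj (T Y)).

Definition orthproj {k} (P : 'M[C]_k) : Prop := P *m P = P /\ mxadj P = P.

Definition corner_sub {k} (W V : 'M[C]_k) : Prop :=
  forall X, exists Y, W *m X *m W = V *m Y *m V.

Definition corner_invariant {k} (T : 'M[C]_k -> 'M[C]_k) (W : 'M[C]_k) : Prop :=
  forall X, exists Y, T (W *m X *m W) = W *m Y *m W.

Definition irreducible_on {k} (T : 'M[C]_k -> 'M[C]_k) (V : 'M[C]_k) : Prop :=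
  forall W, orthproj W -> corner_sub W V -> corner_invariant T W ->
    W = 0 \/ W = V.

Definition completely_reducible {k} (T : 'M[C]_k -> 'M[C]_k) : Prop :=
  selfadjoint_map T /\ positive_map T /\
  exists (l : nat) (W : 'I_l -> 'M[C]_k),
    [/\ forall i, orthproj (W i),
        forall i j, i != j -> W i *m W j = 0,
        forall i, corner_invariant T (W i),
        forall i, irreducible_on T (W i)
      & forall X, (forall i Y, \tr (X *m mxadj (W i *m Y *m W i)) = 0) -> T X = 0].

Definition CR {k m} (g : 'M[C]_(k * m)) : Prop :=
  psd g /\ completely_reducible (Fmap g \o Gmap g).

End Defs.

(* Main.v *)
Require Import Defs.
From HB Require Import structures.
From mathcomp Require Import all_boot all_order all_algebra.
From mathcomp Require Import mxtens.
From Stdlib Require Import Classical.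
Set Implicit Arguments. Unset Strict Implicit. Unset Printing Implicit Defensive.
Import Order.TTheory GRing.Theory Num.Theory.
Local Open Scope ring_scope.

Section Basic.
Variable C : numClosedFieldType.

Lemma mxadjE p q (A : 'M[C]_(p,q)) i j : mxadj A i j = (A j i)^*.
Proof. by rewrite !mxE. Qed.

Lemma mxadjK p q (A : 'M[C]_(p,q)) : mxadj (mxadj A) = A.
Proof. by apply/matrixP=> i j; rewrite !mxE conjCK. Qed.

Lemma mxadjM p q r (A : 'M[C]_(p,q)) (B : 'M[C]_(q,r)) :
  mxadj (A *m B) = mxadj B *m mxadj A.
Proof. by rewrite /mxadj trmx_mul map_mxM. Qed.

Lemma mxadjD p q (A B : 'M[C]_(p,q)) : mxadj (A + B) = mxadj A + mxadj B.
Proof. by rewrite /mxadj linearD /= map_mxD. Qed.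

Lemma mxadjN p q (A : 'M[C]_(p,q)) : mxadj (- A) = - mxadj A.
Proof. by rewrite /mxadj linearN /= map_mxN. Qed.

Lemma mxadjB p q (A B : 'M[C]_(p,q)) : mxadj (A - B) = mxadj A - mxadj B.
Proof. by rewrite mxadjD mxadjN. Qed.

Lemma mxadj0 p q : mxadj (0 : 'M[C]_(p,q)) = 0.
Proof. by apply/matrixP=> i j; rewrite !mxE conjC0. Qed.

Lemma mxadj1 p : mxadj (1%:M : 'M[C]_p) = 1%:M.
Proof. by rewrite /mxadj tr_scalar_mx map_scalar_mx /= conjC1. Qed.

Lemma tr_mxadj p (A : 'M[C]_p) : \tr (mxadj A) = (\tr A)^*.
Proof. by rewrite /mxtrace rmorph_sum; apply: eq_bigr => i _; rewrite !mxE. Qed.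

Lemma tr_adj_sum p q (A : 'M[C]_(p,q)) :
  \tr (A *m mxadj A) = \sum_i \sum_j `|A i j| ^+ 2.
Proof.
rewrite /mxtrace; apply: eq_bigr => i _; rewrite !mxE; apply: eq_bigr => j _.
by rewrite !mxE -normCK.
Qed.

Lemma tr_adj_ge0 p q (A : 'M[C]_(p,q)) : 0 <= \tr (A *m mxadj A).
Proof.
by rewrite tr_adj_sum; apply: sumr_ge0 => i _; apply: sumr_ge0 => j _; rewrite exprn_ge0.
Qed.

Lemma tr_adj_eq0 p q (A : 'M[C]_(p,q)) : \tr (A *m mxadj A) = 0 -> A = 0.
Proof.
rewrite tr_adj_sum => /eqP; rewrite psumr_eq0; last first.
  by move=> i _; apply: sumr_ge0 => j _; rewrite exprn_ge0.
move=> /allP H; apply/matrixP => i j; rewrite mxE.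
have /implyP/(_ isT) := H i (mem_index_enum _).
rewrite psumr_eq0; last by move=> l _; rewrite exprn_ge0.
move=> /allP/(_ j (mem_index_enum _))/implyP/(_ isT).
by rewrite expf_eq0 /= normr_eq0 => /eqP.
Qed.

End Basic.

Section Fact.
Variable C : numClosedFieldType.

Lemma mxadj_delta p q (i : 'I_p) (j : 'I_q) :
  mxadj (delta_mx i j : 'M[C]_(p,q)) = delta_mx j i.
Proof.
apply/matrixP=> a b; rewrite !mxE.
by case: (a == j); case: (b == i); rewrite /= ?conjC1 ?conjC0.
Qed.

Lemma quad_e n (D : 'M[C]_n) (i : 'I_n) :
  ((delta_mx 0 i : 'rV_n) *m D *m mxadj (delta_mx 0 i : 'rV_n)) 0 0 = D i i.
Proof.
by rewrite mxadj_delta -rowE -colE !mxE.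
Qed.

Lemma psd_fact n (A : 'M[C]_n) : psd A -> exists H : 'M[C]_n, A = mxadj H *m H.
Proof.
case=> hA pA.
have nA : A \is normalmx.
  by apply/normalmxP; have e : map_mx Num.conj A^T = A := hA; rewrite e.
set P := spectralmx A; set d := spectral_diag A.
have PU : P \is unitarymx := spectral_unitarymx A.
have eA : A = mxadj P *m diag_mx d *m P.
  by rewrite {1}(orthomx_spectralP nA) invmx_unitary.
have PPt : P *m mxadj P = 1%:M := unitarymxP PU.
have dge0 : forall i, 0 <= d 0 i.
  move=> i; have := pA (row i P).
  have K : forall q (X : 'M[C]_(q,n)), X *m P *m mxadj P = X.
    by move=> q X; rewrite -mulmxA PPt mulmx1.
  rewrite rowE mxadjM eA !mulmxA K K quad_e.
  by rewrite mxE eqxx mulr1n.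
exists (diag_mx (\row_j sqrtC (d 0 j)) *m P).
rewrite mxadjM /mxadj tr_diag_mx map_diag_mx -/(mxadj P).
rewrite eA -!mulmxA; congr (_ *m _); rewrite !mulmxA mulmx_diag; congr (_ *m _).
congr diag_mx; apply/rowP=> j; rewrite !mxE.
have s0 : 0 <= sqrtC (d 0 j) by rewrite sqrtC_ge0.
rewrite -{1}(sqrtCK (d 0 j)) expr2; congr (_ * _); exact/esym/(geC0_conj s0).
Qed.

End Fact.

Section Tens.
Variable C : numClosedFieldType.
Variables k m : nat.
Implicit Types g : 'M[C]_(k * m).

Lemma sum_tidx (F : 'I_(k * m) -> C) :
  \sum_p F p = \sum_i \sum_j F (tidx i j).
Proof.
rewrite pair_big /=; apply: reindex => /=.
exists (@mxtens_unindex k m) => p _; rewrite /tidx.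
  by rewrite mxtens_indexK; case: p.
by rewrite -surjective_pairing mxtens_unindexK.
Qed.

Lemma sum4C (I J K L : finType) (F : I -> J -> K -> L -> C) :
  \sum_a \sum_b \sum_c \sum_d F a b c d = \sum_c \sum_d \sum_a \sum_b F a b c d.
Proof.
under eq_bigr do rewrite exchange_big.
rewrite exchange_big; apply: eq_bigr => c _.
under eq_bigr do rewrite exchange_big.
by rewrite exchange_big.
Qed.

Lemma tensE p q r s (A : 'M[C]_(p, q)) (B : 'M[C]_(r, s)) i j i' j' :
  (A *t B) (tidx i j) (tidx i' j') = A i i' * B j j'.
Proof. exact: tensmxE. Qed.

Lemma tr_tens g (X : 'M[C]_k) (Y : 'M[C]_m) :
  \tr (g *m (X *t Y)) =
  \sum_i \sum_i' \sum_j \sum_j' g (tidx i j) (tidx i' j') * X i' i * Y j' j.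
Proof.
rewrite /mxtrace sum_tidx; apply: eq_bigr => i _.
under eq_bigr do rewrite mxE sum_tidx.
rewrite exchange_big; apply: eq_bigr => i' _.
apply: eq_bigr => j _; apply: eq_bigr => j' _.
by rewrite tensE mulrA.
Qed.

Lemma tr_Gmap g (X : 'M[C]_k) (Y : 'M[C]_m) :
  \tr (Gmap g X *m Y) = \tr (g *m (X *t Y)).
Proof.
rewrite tr_tens /mxtrace.
under eq_bigr do (rewrite mxE; under eq_bigr do rewrite !mxE mulr_suml).
under eq_bigr do under eq_bigr do under eq_bigr do rewrite mulr_suml.
by rewrite sum4C.
Qed.

Lemma tr_Fmap g (X : 'M[C]_k) (Y : 'M[C]_m) :
  \tr (Fmap g Y *m X) = \tr (g *m (X *t Y)).
Proof.
rewrite tr_tens /mxtrace.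
apply: eq_bigr => i _; rewrite mxE; apply: eq_bigr => i' _.
rewrite !mxE mulr_suml; apply: eq_bigr => j _.
rewrite mulr_suml; apply: eq_bigr => j' _.
by rewrite -!mulrA [Y _ _ * _]mulrC.
Qed.

Lemma tr_ptrans g (X : 'M[C]_k) (Y : 'M[C]_m) :
  \tr (ptrans g *m (X *t Y)) = \tr (g *m (X *t Y^T)).
Proof.
rewrite !tr_tens; apply: eq_bigr => i _; apply: eq_bigr => i' _.
rewrite exchange_big; apply: eq_bigr => j _; apply: eq_bigr => j' _.
by rewrite /ptrans !mxE /tidx !mxtens_indexK.
Qed.

End Tens.

Section ND.
Variable C : numClosedFieldType.

Lemma tr_delta n (M : 'M[C]_n) i j : \tr (M *m delta_mx j i) = M i j.
Proof.
rewrite /mxtrace (bigD1 i) //= big1 ?addr0.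
  rewrite mxE (bigD1 j) //= big1 ?addr0; first by rewrite mxE !eqxx mulr1.
  by move=> b /negbTE nb; rewrite mxE nb mulr0.
move=> a /negbTE na; rewrite mxE big1 // => b _.
by rewrite mxE na andbF mulr0.
Qed.

Lemma nd1 n (M N : 'M[C]_n) : (forall Y, \tr (M *m Y) = \tr (N *m Y)) -> M = N.
Proof. by move=> H; apply/matrixP=> i j; rewrite -!tr_delta H. Qed.

Variables k m : nat.

Lemma delta_tens (a a' : 'I_k) (b b' : 'I_m) :
  delta_mx (tidx a b) (tidx a' b') = (delta_mx a a' : 'M[C]_k) *t (delta_mx b b' : 'M[C]_m).
Proof.
apply/matrixP=> p q.
case: (mxtens_indexP p) => i j; case: (mxtens_indexP q) => i' j'.
rewrite [RHS]tensmxE !mxE /tidx.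
rewrite !(inj_eq (can_inj (@mxtens_indexK k m))) !xpair_eqE.
by case: (i == a); case: (j == b); case: (i' == a'); case: (j' == b');
   rewrite /= ?mulr1 ?mulr0 ?mul0r.
Qed.

Lemma nd2 (M N : 'M[C]_(k * m)) :
  (forall X Y, \tr (M *m (X *t Y)) = \tr (N *m (X *t Y))) -> M = N.
Proof.
move=> H; apply/matrixP => p q; rewrite -!tr_delta.
case: (mxtens_indexP p) => a b; case: (mxtens_indexP q) => a' b'.
by rewrite delta_tens H.
Qed.

Lemma mxadj_tens p q r s (A : 'M[C]_(p,q)) (B : 'M[C]_(r,s)) :
  mxadj (A *t B) = mxadj A *t mxadj B.
Proof. by rewrite /mxadj trmx_tens map_mxT. Qed.

Lemma tr_adjM p q (A : 'M[C]_(p,q)) (B : 'M[C]_(p,q)) :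
  \tr (mxadj A *m B) = (\tr (mxadj B *m A))^*.
Proof. by rewrite -tr_mxadj mxadjM mxadjK mxtrace_mulC. Qed.

Implicit Types g : 'M[C]_(k * m).

Lemma G_conj g (A A' : 'M[C]_k) (B B' : 'M[C]_m) Z :
  Gmap ((A *t B) *m g *m (A' *t B')) Z = B *m Gmap g (A' *m Z *m A) *m B'.
Proof.
apply: nd1 => Y; rewrite tr_Gmap -!mulmxA mxtrace_mulC -!mulmxA !tensmx_mul.
by rewrite -tr_Gmap [RHS]mxtrace_mulC -!mulmxA.
Qed.

Lemma F_conj g (A A' : 'M[C]_k) (B B' : 'M[C]_m) Y :
  Fmap ((A *t B) *m g *m (A' *t B')) Y = A *m Fmap g (B' *m Y *m B) *m A'.
Proof.
apply: nd1 => X; rewrite tr_Fmap -!mulmxA mxtrace_mulC -!mulmxA !tensmx_mul.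
by rewrite -tr_Fmap [RHS]mxtrace_mulC -!mulmxA.
Qed.

Lemma G_adj g X : mxadj (Gmap g X) = Gmap (mxadj g) (mxadj X).
Proof.
apply: nd1 => Y; rewrite tr_adjM [in LHS]mxtrace_mulC [in LHS]tr_Gmap.
by rewrite -tr_mxadj mxadjM mxadj_tens mxadjK mxtrace_mulC tr_Gmap.
Qed.

Lemma F_adj g Y : mxadj (Fmap g Y) = Fmap (mxadj g) (mxadj Y).
Proof.
apply: nd1 => X; rewrite tr_adjM [in LHS]mxtrace_mulC [in LHS]tr_Fmap.
by rewrite -tr_mxadj mxadjM mxadj_tens mxadjK mxtrace_mulC tr_Fmap.
Qed.

End ND.

Section Psd.
Variable C : numClosedFieldType.

Lemma tr11 (M : 'M[C]_1) : \tr M = M 0 0.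
Proof. by rewrite /mxtrace big_ord1. Qed.

Lemma psd_adjH p n (H : 'M[C]_(p, n)) : psd (mxadj H *m H).
Proof.
split; first by rewrite mxadjM mxadjK.
move=> v; rewrite mulmxA -tr11 -mulmxA -[H *m _]mxadjK mxadjM mxadjK.
exact: tr_adj_ge0.
Qed.

Lemma psd_herm n (A : 'M[C]_n) : psd A -> mxadj A = A.
Proof. by case. Qed.

Lemma psd_kill p n (A : 'M[C]_n) (B : 'M[C]_(p, n)) :
  psd A -> \tr (B *m A *m mxadj B) = 0 -> B *m A = 0.
Proof.
move=> /psd_fact [H ->]; rewrite mulmxA.
have -> : B *m mxadj H *m H *m mxadj B = (B *m mxadj H) *m mxadj (B *m mxadj H).
  by rewrite mxadjM mxadjK !mulmxA.
by move=> /tr_adj_eq0 ->; rewrite mul0mx.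
Qed.

Lemma psd_kill_r p n (A : 'M[C]_n) (B : 'M[C]_(p, n)) :
  psd A -> \tr (B *m A *m mxadj B) = 0 -> A *m mxadj B = 0.
Proof.
move=> pA /(psd_kill pA) h; rewrite -(psd_herm pA) -mxadjM h.
by rewrite mxadj0.
Qed.

Lemma psd_trM_eq n (A B : 'M[C]_n) : psd A -> psd B ->
  exists M : 'M[C]_n, \tr (A *m B) = \tr (M *m mxadj M) /\
     (M = 0 -> A *m B = 0).
Proof.
move=> /psd_fact [H ->] /psd_fact [K ->].
exists (H *m mxadj K); split.
  by rewrite mxadjM mxadjK -!mulmxA mxtrace_mulC !mulmxA.
by move=> e; rewrite -mulmxA (mulmxA H) e mul0mx mulmx0.
Qed.

Lemma psd_trM_ge0 n (A B : 'M[C]_n) : psd A -> psd B -> 0 <= \tr (A *m B).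
Proof. by move=> pA pB; have [M [-> _]] := psd_trM_eq pA pB; exact: tr_adj_ge0. Qed.

Lemma psd_trM_eq0 n (A B : 'M[C]_n) : psd A -> psd B -> \tr (A *m B) = 0 ->
  A *m B = 0.
Proof.
by move=> pA pB; have [M [-> h]] := psd_trM_eq pA pB; move/tr_adj_eq0.
Qed.

Lemma psd_tens p q (X : 'M[C]_p) (Y : 'M[C]_q) : psd X -> psd Y -> psd (X *t Y).
Proof.
move=> /psd_fact [H ->] /psd_fact [K ->].
by rewrite -tensmx_mul -mxadj_tens; apply: psd_adjH.
Qed.

Variables k m : nat.
Implicit Types g : 'M[C]_(k * m).

Lemma ptrans_conj g (A A' : 'M[C]_k) (B B' : 'M[C]_m) :
  ptrans ((A *t B) *m g *m (A' *t B')) = (A *t B'^T) *m ptrans g *m (A' *t B^T).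
Proof.
apply: nd2 => X Y; rewrite tr_ptrans -!mulmxA mxtrace_mulC -!mulmxA !tensmx_mul.
rewrite [RHS]mxtrace_mulC -!mulmxA !tensmx_mul tr_ptrans.
by rewrite !trmx_mul !trmxK !mulmxA.
Qed.

Lemma ptransK g : ptrans (ptrans g) = g.
Proof.
apply/matrixP => p q; rewrite /ptrans !mxE /tidx !mxtens_indexK /=.
exact: (congr2 g (mxtens_unindexK p) (mxtens_unindexK q)).
Qed.

Lemma ptrans0 : ptrans (0 : 'M[C]_(k * m)) = 0.
Proof. by apply/matrixP => p q; rewrite !mxE. Qed.

Lemma G_addg g1 g2 Z : Gmap (g1 + g2) Z = Gmap g1 Z + Gmap g2 Z.
Proof. by apply: nd1 => Y; rewrite tr_Gmap !mulmxDl !mxtraceD !tr_Gmap. Qed.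

Lemma F_addg g1 g2 Z : Fmap (g1 + g2) Z = Fmap g1 Z + Fmap g2 Z.
Proof. by apply: nd1 => Y; rewrite tr_Fmap !mulmxDl !mxtraceD !tr_Fmap. Qed.

Lemma G0 g : @Gmap C k m g 0 = 0.
Proof.
apply: nd1 => Y; rewrite tr_Gmap.
have -> : (0 : 'M[C]_k) *t Y = 0 by apply/matrixP=> i j; rewrite !mxE mul0r.
by rewrite mulmx0 mul0mx !linear0.
Qed.

Lemma F0 g : @Fmap C k m g 0 = 0.
Proof.
apply: nd1 => Y; rewrite tr_Fmap.
have -> : Y *t (0 : 'M[C]_m) = 0 by apply/matrixP=> i j; rewrite !mxE mulr0.
by rewrite mulmx0 mul0mx !linear0.
Qed.


End Psd.

Section Proj.
Variable C : numClosedFieldType.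

Lemma range_proj n (S : 'M[C]_n) :
  exists R : 'M[C]_n, [/\ orthproj R, S *m R = S & exists D, R = D *m S].
Proof.
set B := schmidt (row_base S).
have BU : B \is unitarymx by apply: schmidt_unitarymx; exact: rank_leq_col.
have BB : B *m mxadj B = 1%:M := unitarymxP BU.
have eB : (B :=: S)%MS.
  by apply: eqmx_trans (eq_row_base S); apply: eqmx_schmidt_free; exact: row_base_free.
exists (mxadj B *m B); split.
- split; last by rewrite mxadjM mxadjK.
  by rewrite mulmxA -(mulmxA _ B) BB mulmx1.
- have [E eS] : exists E, S = E *m B by apply/submxP; rewrite eB.
  have -> : S *m (mxadj B *m B) = E *m B *m (mxadj B *m B) by congr (_ *m _).
  by rewrite mulmxA -(mulmxA E) BB mulmx1.
- apply/submxP; rewrite -eB; exact: submxMl.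
Qed.

Lemma orthproj_psd n (W : 'M[C]_n) : orthproj W -> psd W.
Proof. by case=> h1 h2; rewrite -h1 -{1}h2; apply: psd_adjH. Qed.

Lemma orthproj_compl n (W : 'M[C]_n) : orthproj W -> orthproj (1%:M - W).
Proof.
case=> h1 h2; split; last by rewrite mxadjB mxadj1 h2.
by rewrite mulmxBl mul1mx mulmxBr mulmx1 h1 subrr subr0.
Qed.

Lemma orthproj_compl0 n (W : 'M[C]_n) : orthproj W ->
  W *m (1%:M - W) = 0 /\ (1%:M - W) *m W = 0.
Proof.
case=> h1 _; rewrite mulmxBl mulmxBr mul1mx mulmx1 h1.
by split; rewrite subrr.
Qed.

Lemma mxadj_tr p q (A : 'M[C]_(p,q)) : mxadj (A^T) = (mxadj A)^T.
Proof. by apply/matrixP=> i j; rewrite !mxE. Qed.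

Lemma tensDl p q r s (A B : 'M[C]_(p,q)) (D : 'M[C]_(r,s)) :
  (A + B) *t D = A *t D + B *t D.
Proof. by apply/matrixP=> i j; rewrite !mxE mulrDl. Qed.

Lemma tensDr p q r s (A : 'M[C]_(p,q)) (B D : 'M[C]_(r,s)) :
  A *t (B + D) = A *t B + A *t D.
Proof. by apply/matrixP=> i j; rewrite !mxE mulrDr. Qed.

Lemma tens11 p q : (1%:M : 'M[C]_p) *t (1%:M : 'M[C]_q) = 1%:M.
Proof.
apply/matrixP=> i j.
case: (mxtens_indexP i) => a b; case: (mxtens_indexP j) => a' b'.
rewrite tensmxE !mxE (inj_eq (can_inj (@mxtens_indexK p q))) xpair_eqE.
by case: (a == a'); case: (b == b'); rewrite /= ?mulr1 ?mulr0 ?mul0r.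
Qed.

Lemma tens_sum4 p q (A A' : 'M[C]_p) (B B' : 'M[C]_q) :
  A + A' = 1%:M -> B + B' = 1%:M ->
  A *t B + A' *t B' + A *t B' + A' *t B = 1%:M.
Proof.
move=> hA hB; rewrite -(tens11 p q) -hA -hB tensDl !tensDr.
rewrite -!addrA; congr (_ + _).
by rewrite addrC [RHS]addrA.
Qed.

End Proj.

Section TProps.
Variable C : numClosedFieldType.
Variables k m : nat.
Variable g : 'M[C]_(k * m).
Hypothesis pg : psd g.

Let hg : mxadj g = g := psd_herm pg.

Lemma G_herm X : mxadj (Gmap g X) = Gmap g (mxadj X).
Proof. by rewrite G_adj hg. Qed.

Lemma F_herm Y : mxadj (Fmap g Y) = Fmap g (mxadj Y).
Proof. by rewrite F_adj hg. Qed.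

Lemma G_psd X : psd X -> psd (Gmap g X).
Proof.
move=> pX; split; first by rewrite G_herm (psd_herm pX).
move=> v; rewrite -tr11 mxtrace_mulC mulmxA mxtrace_mulC tr_Gmap.
apply: psd_trM_ge0 => //; apply: psd_tens => //; exact: psd_adjH.
Qed.

Lemma F_psd Y : psd Y -> psd (Fmap g Y).
Proof.
move=> pY; split; first by rewrite F_herm (psd_herm pY).
move=> v; rewrite -tr11 mxtrace_mulC mulmxA mxtrace_mulC tr_Fmap.
apply: psd_trM_ge0 => //; apply: psd_tens => //; exact: psd_adjH.
Qed.

Lemma T_selfadj : selfadjoint_map (Fmap g \o Gmap g).
Proof.
move=> X Y /=; rewrite (tr_Fmap g) -(tr_Gmap g) F_herm G_herm.
rewrite [RHS]mxtrace_mulC (tr_Fmap g) -(tr_Gmap g).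
by rewrite mxtrace_mulC.
Qed.

Lemma T_pos : positive_map (Fmap g \o Gmap g).
Proof. by move=> X pX /=; apply: F_psd; apply: G_psd. Qed.

End TProps.

Section KeyLemma.
Variable C : numClosedFieldType.
Variables k m : nat.
Variable g : 'M[C]_(k * m).
Hypothesis pg : psd g.
Hypothesis pt : psd (ptrans g).
Variable W : 'M[C]_k.
Hypothesis hW : orthproj W.
Hypothesis inv : corner_invariant (Fmap g \o Gmap g) W.

Lemma key_decomp : exists R : 'M[C]_m, orthproj R /\
  g = (W *t R) *m g *m (W *t R) +
      ((1%:M - W) *t (1%:M - R)) *m g *m ((1%:M - W) *t (1%:M - R)).
Proof.
have hg := psd_herm pg.
set W' := 1%:M - W.
have hW' : orthproj W' := orthproj_compl hW.
have [e1 e2] := orthproj_compl0 hW; rewrite -/W' in e1 e2.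
case: (hW) => hWW hWa; case: (hW') => hWW' hWa'.
have [Y0 eT] := inv 1%:M; rewrite /= mulmx1 hWW in eT.
have tra : \tr (Gmap g W' *m Gmap g W) = 0.
  rewrite (tr_Gmap g) -(tr_Fmap g) eT -!mulmxA e1 !mulmx0.
  exact: linear0.
have pS1 := G_psd pg (orthproj_psd hW).
have pS2 := G_psd pg (orthproj_psd hW').
have S21 := psd_trM_eq0 pS2 pS1 tra.
have [R [hR SR [D eR]]] := range_proj (Gmap g W).
exists R; split => //.
set R' := 1%:M - R.
have hR' : orthproj R' := orthproj_compl hR.
have [f1 f2] := orthproj_compl0 hR; rewrite -/R' in f1 f2.
case: (hR) => hRR hRa; case: (hR') => hRR' hRa'.
have S2R : Gmap g W' *m R = 0.
  by rewrite -hRa eR mxadjM (psd_herm pS1) mulmxA S21 mul0mx.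
have S1R' : Gmap g W *m R' = 0.
  by rewrite mulmxBr mulmx1 SR subrr.
set Q3 := W *t R'.
have hQ3 : mxadj Q3 = Q3 by rewrite mxadj_tens hWa hRa'.
have trQ3 : \tr (Q3 *m g *m mxadj Q3) = 0.
  rewrite hQ3 mxtrace_mulC mulmxA tensmx_mul hWW hRR' mxtrace_mulC.
  by rewrite -(tr_Gmap g) S1R' linear0.
have Q3g : Q3 *m g = 0 := psd_kill pg trQ3.
have gQ3 : g *m Q3 = 0 by have := psd_kill_r pg trQ3; rewrite hQ3.
set Q4 := W' *t R.
have hQ4 : mxadj Q4 = Q4 by rewrite mxadj_tens hWa' hRa.
have trQ4 : \tr (Q4 *m g *m mxadj Q4) = 0.
  rewrite hQ4 mxtrace_mulC mulmxA tensmx_mul hWW' hRR mxtrace_mulC.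
  by rewrite -(tr_Gmap g) S2R linear0.
have Q4g : Q4 *m g = 0 := psd_kill pg trQ4.
have gQ4 : g *m Q4 = 0 by have := psd_kill_r pg trQ4; rewrite hQ4.
set Q1 := W *t R.
set Q2 := W' *t R'.
have hQ1 : mxadj Q1 = Q1 by rewrite mxadj_tens hWa hRa.
have hQ2 : mxadj Q2 = Q2 by rewrite mxadj_tens hWa' hRa'.
set P := W *t R'^T.
have hP : mxadj P = P by rewrite mxadj_tens hWa mxadj_tr hRa'.
have trP : \tr (P *m ptrans g *m mxadj P) = 0.
  rewrite hP /P -ptrans_conj -/Q3 Q3g mul0mx ptrans0.
  exact: linear0.
have Pg := psd_kill pt trP.
have Q12 : Q1 *m g *m Q2 = 0.
  rewrite -[LHS]ptransK /Q1 /Q2 ptrans_conj -/P Pg mul0mx ptrans0.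
  done.
have Q21 : Q2 *m g *m Q1 = 0.
  by rewrite -hQ1 -hQ2 -hg -!mxadjM mulmxA Q12 mxadj0.
have sumQ : Q1 + Q2 + Q3 + Q4 = 1%:M.
  apply: tens_sum4; first by rewrite /W' addrC subrK.
  by rewrite /R' addrC subrK.

have gL : g = (Q1 + Q2) *m g.
  by rewrite -{1}[g]mul1mx -sumQ !mulmxDl Q3g Q4g !addr0.
have gR : g = g *m (Q1 + Q2).
  by rewrite -{1}[g]mulmx1 -sumQ !mulmxDr gQ3 gQ4 !addr0.
rewrite {1}gR {1}gL !mulmxDl !mulmxDr Q12 Q21 addr0 add0r.
done.
Qed.

Lemma key_cons :
  [/\ forall X, (Fmap g \o Gmap g) (W *m X *m (1%:M - W)) = 0,
      forall X, (Fmap g \o Gmap g) ((1%:M - W) *m X *m W) = 0 &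
      corner_invariant (Fmap g \o Gmap g) (1%:M - W)].
Proof.
have [R [hR gE]] := key_decomp.
set W' := 1%:M - W; set R' := 1%:M - R.
have [e1 e2] := orthproj_compl0 hW; rewrite -/W' in e1 e2.
have [f1 f2] := orthproj_compl0 hR; rewrite -/R' in f1 f2.
have GE : forall Z, Gmap g Z =
    R *m Gmap g (W *m Z *m W) *m R + R' *m Gmap g (W' *m Z *m W') *m R'.
  by move=> Z; rewrite {1}gE G_addg !G_conj.
have FE : forall Y, Fmap g Y =
    W *m Fmap g (R *m Y *m R) *m W + W' *m Fmap g (R' *m Y *m R') *m W'.
  by move=> Y; rewrite {1}gE F_addg !F_conj.
split.
- move=> X /=; rewrite GE.
  have -> : W *m (W *m X *m W') *m W = 0 by rewrite -!mulmxA e2 !mulmx0.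
  have -> : W' *m (W *m X *m W') *m W' = 0 by rewrite !mulmxA e2 !mul0mx.
  by rewrite G0 mulmx0 mul0mx add0r mulmx0 mul0mx F0.
- move=> X /=; rewrite GE.
  have -> : W *m (W' *m X *m W) *m W = 0 by rewrite !mulmxA e1 !mul0mx.
  have -> : W' *m (W' *m X *m W) *m W' = 0 by rewrite -!mulmxA e1 !mulmx0.
  by rewrite G0 mulmx0 mul0mx add0r mulmx0 mul0mx F0.
- move=> X /=; rewrite GE.
  have -> : W *m (W' *m X *m W') *m W = 0 by rewrite !mulmxA e1 !mul0mx.
  rewrite G0 mulmx0 mul0mx add0r FE.
  have -> : R *m (R' *m Gmap g (W' *m (W' *m X *m W') *m W') *m R') *m R = 0.
    by rewrite !mulmxA f1 !mul0mx.
  rewrite F0 mulmx0 mul0mx add0r.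
  by eexists.
Qed.

End KeyLemma.

Section ProjLemmas.
Variable C : numClosedFieldType.
Variable n : nat.
Implicit Types V W : 'M[C]_n.

Lemma sub_le V W : orthproj V -> orthproj W -> V *m W = W -> W *m V = W.
Proof.
by case=> _ hVa [_ hWa] e; rewrite -hVa -{1}hWa -mxadjM e hWa.
Qed.

Lemma corner_subE V W : orthproj V -> orthproj W -> corner_sub W V -> V *m W = W.
Proof.
case=> hVV _ [hWW _] c; have [Y e] := c 1%:M; rewrite mulmx1 hWW in e.
by rewrite {1}e !mulmxA hVV e.
Qed.

Lemma corner_subI V W : orthproj V -> orthproj W -> V *m W = W -> corner_sub W V.
Proof.
move=> hV hW e X; exists (W *m X *m W).
by rewrite !mulmxA e -!mulmxA (sub_le hV hW e).
Qed.

Lemma orthproj_diff V W : orthproj V -> orthproj W -> V *m W = W ->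
  orthproj (V - W).
Proof.
move=> hV hW e; have e' := sub_le hV hW e.
case: hV => hVV hVa; case: hW => hWW hWa; split; last by rewrite mxadjB hVa hWa.
by rewrite mulmxBl !mulmxBr hVV hWW e e' subrr subr0.
Qed.

Lemma rank_lt V W : orthproj V -> orthproj W -> V *m W = W -> W != V ->
  (\rank W < \rank V)%N.
Proof.
move=> hV hW e ne; have e' := sub_le hV hW e.
have sWV : (W <= V)%MS by rewrite -e'; exact: submxMl.
rewrite ltn_neqAle (mxrankS sWV) andbT.
apply: contra ne => /eqP eqr.
have := mxrank_leqif_sup sWV; rewrite eqr => /leqif_refl sVW.
have [E eV] := submxP sVW.
have hVW : V *m W = V.
  case: hW => hWW _; by rewrite {1}eV -mulmxA hWW -eV.
by apply/eqP; rewrite -hVW e.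
Qed.

End ProjLemmas.

Lemma tr_proj_sq (C : numClosedFieldType) n (W X : 'M[C]_n) : orthproj W ->
  \tr (W *m X *m W *m mxadj (W *m X *m W)) = \tr (X *m mxadj (W *m X *m W)).
Proof.
case=> hWW hWa; set M := mxadj (W *m X *m W).
have eM : M = W *m mxadj X *m W by rewrite /M !mxadjM hWa mulmxA.
have WM : W *m M = M by rewrite eM !mulmxA hWW.
have MW : M *m W = M by rewrite eM -!mulmxA hWW.
by rewrite -mulmxA WM mxtrace_mulC mulmxA MW mxtrace_mulC.
Qed.

Section Assembly.
Variable C : numClosedFieldType.
Variables k m : nat.
Variable g : 'M[C]_(k * m).
Hypothesis pg : psd g.
Hypothesis pt : psd (ptrans g).

Let T := Fmap g \o Gmap g.
Let inv := corner_invariant T.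

Lemma G_addZ Z1 Z2 : Gmap g (Z1 + Z2) = Gmap g Z1 + Gmap g Z2.
Proof.
apply: nd1 => Y.
by rewrite (tr_Gmap g) tensDl mulmxDr mxtraceD mulmxDl mxtraceD !(tr_Gmap g).
Qed.

Lemma F_addZ Z1 Z2 : Fmap g (Z1 + Z2) = Fmap g Z1 + Fmap g Z2.
Proof.
apply: nd1 => Y.
by rewrite (tr_Fmap g) tensDr mulmxDr mxtraceD mulmxDl mxtraceD !(tr_Fmap g).
Qed.

Lemma T_add A B : T (A + B) = T A + T B.
Proof. by rewrite /T /= G_addZ F_addZ. Qed.

Lemma T0 : T 0 = 0.
Proof. by rewrite /T /= G0 F0. Qed.

Lemma T_sum (I : Type) (r : seq I) (F : I -> 'M[C]_k) :
  T (\sum_(i <- r) F i) = \sum_(i <- r) T (F i).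
Proof. exact: (big_morph T T_add T0). Qed.

Lemma inv_diff V W : orthproj V -> orthproj W -> V *m W = W -> inv V -> inv W ->
  inv (V - W).
Proof.
move=> hV hW e iV iW X.
have e' := sub_le hV hW e.
have [_ _ iW'] := key_cons pg pt hW iW.
case: (hV) => hVV _.
have E1 : V - W = V *m (1%:M - W) by rewrite mulmxBr mulmx1 e.
have E2 : V - W = (1%:M - W) *m V by rewrite mulmxBl mul1mx e'.
set Z := T ((V - W) *m X *m (V - W)).
have [Y1 eY1] : exists Y, Z = V *m Y *m V.
  have [Y eY] := iV ((1%:M - W) *m X *m (1%:M - W)).
  by exists Y; rewrite /Z -eY {1}E1 E2 !mulmxA.
have [Y2 eY2] : exists Y, Z = (1%:M - W) *m Y *m (1%:M - W).
  have [Y eY] := iW' (V *m X *m V).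
  by exists Y; rewrite /Z -eY {1}E2 E1 !mulmxA.
exists Z.
have h1 : V *m Z *m V = Z by rewrite eY1 !mulmxA hVV -!mulmxA hVV.
have [hWW' _] := orthproj_compl hW.
have h2 : (1%:M - W) *m Z *m (1%:M - W) = Z.
  by rewrite eY2 !mulmxA hWW' -!mulmxA hWW'.
have -> : (V - W) *m Z *m (V - W) = V *m ((1%:M - W) *m Z *m (1%:M - W)) *m V.
  by rewrite {1}E1 {1}E2 !mulmxA.
by rewrite h2 h1.
Qed.

Lemma exists_irr n0 : forall V, (\rank V <= n0)%N -> orthproj V -> inv V ->
  V != 0 ->
  exists Q, [/\ orthproj Q, inv Q, irreducible_on T Q, Q != 0 & V *m Q = Q].
Proof.
elim: n0 => [|n0 IH] V rV hV iV nV.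
  by move: nV; rewrite -mxrank_eq0 -leqn0 rV.
case: (classic (irreducible_on T V)) => [irr|nirr].
  by exists V; split => //; case: hV.
have [W [hW [cW [iW nW]]]] : exists W, orthproj W /\ corner_sub W V /\ inv W /\
    ~ (W = 0 \/ W = V).
  apply: NNPP => H; apply: nirr => W hW cW iW; apply: NNPP => h; apply: H.
  by exists W.
have eVW := corner_subE hV hW cW.
have W0 : W != 0 by apply/eqP => e; apply: nW; left.
have WV : W != V by apply/eqP => e; apply: nW; right.
have rW := rank_lt hV hW eVW WV.
have rW' : (\rank W <= n0)%N by rewrite -ltnS (leq_trans rW rV).
have [Q [hQ iQ irrQ nQ eWQ]] := IH W rW' hW iW W0.
by exists Q; split => //; rewrite -eWQ mulmxA eVW.
Qed.

Lemma decomp n0 : forall V, (\rank V <= n0)%N -> orthproj V -> inv V ->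
  exists ws : seq 'M[C]_k,
   [/\ forall w, w \in ws -> [/\ orthproj w, inv w & irreducible_on T w],
       forall w, w \in ws -> V *m w = w,
       forall i j, (i < size ws)%N -> (j < size ws)%N -> i != j ->
          nth 0 ws i *m nth 0 ws j = 0
     & \sum_(w <- ws) w = V].
Proof.
elim: n0 => [|n0 IH] V rV hV iV.
  have V0 : V = 0 by apply/eqP; rewrite -mxrank_eq0 -leqn0.
  by exists [::]; split => //; rewrite big_nil V0.
have [->|nV] := eqVneq V 0.
  by exists [::]; split => //; rewrite big_nil.
have [Q [hQ iQ irrQ nQ eVQ]] := exists_irr rV hV iV nV.
set V' := V - Q.
have hV' : orthproj V' := orthproj_diff hV hQ eVQ.
have iV' : inv V' := inv_diff hV hQ eVQ iV iQ.
have eQV := sub_le hV hQ eVQ.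
have eVV' : V *m V' = V' by rewrite mulmxBr eVQ; case: hV => -> _.
have nVV' : V' != V.
  apply: contra nQ => /eqP e; rewrite /V' in e.
  have : - Q = 0 by rewrite -(addKr V (-Q)) e addNr.
  by move/eqP; rewrite oppr_eq0.
have rV' := rank_lt hV hV' eVV' nVV'.
have rV'' : (\rank V' <= n0)%N by rewrite -ltnS (leq_trans rV' rV).
have [ws [h1 h2 h3 h4]] := IH V' rV'' hV' iV'.
have QV' : Q *m V' = 0.
  by rewrite mulmxBr eQV; case: hQ => -> _; rewrite subrr.
have Qw : forall w, w \in ws -> Q *m w = 0.
  by move=> w /h2 <-; rewrite mulmxA QV' mul0mx.
have wQ : forall w, w \in ws -> w *m Q = 0.
  move=> w hw; have [[_ hwa] _ _] := h1 w hw; case: (hQ) => _ hQa.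
  by rewrite -hwa -hQa -mxadjM Qw ?mxadj0.
exists (Q :: ws); split.
- by move=> w; rewrite inE => /orP [/eqP ->|/h1].
- move=> w; rewrite inE => /orP [/eqP -> //|hw].
  by rewrite -(h2 w hw) mulmxA eVV'.
- move=> [|i] [|j] //= hi hj nij.
  + exact: Qw (mem_nth 0 hj).
  + exact: wQ (mem_nth 0 hi).
  + exact: h3.
- by rewrite big_cons h4 /V' addrC subrK.
Qed.

Lemma T_cr : completely_reducible (Fmap g \o Gmap g).
Proof.
split; first exact: T_selfadj pg.
split; first exact: T_pos pg.
have inv1 : inv 1%:M.
  by move=> X; exists (T (1%:M *m X *m 1%:M)); rewrite !mul1mx !mulmx1.
have h1M : orthproj (1%:M : 'M[C]_k) by split; [rewrite mulmx1 | exact: mxadj1].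
have [ws [h1 h2 h3 h4]] := decomp (leqnn _) h1M inv1.
have h4' : \sum_(i < size ws) nth 0 ws i = 1%:M.
  by rewrite -h4 (big_nth 0) big_mkord.
exists (size ws), (fun i : 'I_(size ws) => nth 0 ws i); split.
- by move=> i; case: (h1 _ (mem_nth 0 (ltn_ord i))).
- by move=> i j nij; apply: h3.
- by move=> i; case: (h1 _ (mem_nth 0 (ltn_ord i))).
- by move=> i; case: (h1 _ (mem_nth 0 (ltn_ord i))).
move=> X hX.
change (T X = 0); rewrite -[X]mul1mx -[X]mulmx1 -h4' mulmx_suml T_sum big1 // => i _.
rewrite !mulmx_sumr T_sum big1 // => j _.
have [hWi iWi _] := h1 _ (mem_nth 0 (ltn_ord i)).
have [<-|nij] := eqVneq i j.
  suff -> : nth 0 ws i *m (X *m nth 0 ws i) = 0 by exact: T0.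
  apply: tr_adj_eq0; rewrite mulmxA tr_proj_sq //; exact: hX.
have [L1 _ _] := key_cons pg pt hWi iWi.
have hji : nth 0 ws j *m nth 0 ws i = 0.
  by apply: h3 => //; rewrite eq_sym.
have -> : nth 0 ws i *m (X *m nth 0 ws j) =
    nth 0 ws i *m (X *m nth 0 ws j) *m (1%:M - nth 0 ws i).
  by rewrite mulmxBr mulmx1 -!mulmxA hji !mulmx0 subr0.
exact: L1.
Qed.

End Assembly.

Unset Implicit Arguments.

Theorem mainTheorem6 (C : numClosedFieldType) (k m : nat) (g : 'M[C]_(k * m)) :
  psd g -> psd (ptrans g) -> CR g.
Proof. by move=> pg pt; split => //; exact: T_cr pg pt. Qed.
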